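(* Let $G=(V,E)$ be a cactus. Then the diameter $d(\mathrm{CUT}(G))$ of the 1-skeleton of $\mathrm{CUT}(G)$ satisfies $$\left\lfloor \frac{|V|}{2}\right\rfloor \le d(\mathrm{CUT}(G)) \le |V|-1.$$
   Context: For an undirected graph $G=(V,E)$ and $S\subseteq V$, $\delta(S)\subseteq E$ denotes the set of edges with exactly one endpoint in $S$, and $\mathbf v(S)\in\{0,1\}^{E}$ is its incidence vector ($v(S)_e=1$ iff $e\in\delta(S)$). The cut polytope is $\mathrm{CUT}(G)=\operatorname{conv}\{\mathbf v(S):S\subseteq V\}\subset\mathbb R^{E}$. The 1-skeleton of a polytope is the graph whose vertices are the polytope's vertices and whose edges are its one-dimensional faces; $d(\cdot)$ denotes the diameter (maximum shortest-path edge distance between two vertices) of this graph. A cactus is a connected graph in which every edge belongs to at most one simple cycle. *)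

(* Defs.v *)
From mathcomp Require Import all_boot all_order all_algebra.
From mathcomp Require Import reals.
Set Implicit Arguments. Unset Strict Implicit. Unset Printing Implicit Defensive.
Import Order.TTheory GRing.Theory Num.Theory.
Local Open Scope ring_scope.

(* A simple graph on a finite vertex type V is a symmetric irreflexive
   relation e; its edges are the 2-element sets {u,v} with e u v. *)
Definition edges (V : finType) (e : rel V) : {set {set V}} :=
  [set s : {set V} | [exists u, exists v, e u v && (s == [set u; v])]].

Definition edge_t (V : finType) (e : rel V) := {s : {set V} | s \in edges e}.

Definition simple_cycle (V : finType) (e : rel V) (s : seq V) : bool :=
  [&& cycle e s, uniq s & 2 < size s]%N.

Definition cycle_edges (V : finType) (s : seq V) : {set {set V}} :=
  [set [set x; next s x] | x in s].

(* cactus: connected, every edge lies on at most one simple cycle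
   (cycles considered as subgraphs, i.e. through their edge sets) *)
Definition is_cactus (V : finType) (e : rel V) : Prop :=
  (forall u v : V, connect e u v) /\
  (forall s1 s2 : seq V, simple_cycle e s1 -> simple_cycle e s2 ->
     forall f : {set V}, f \in cycle_edges s1 -> f \in cycle_edges s2 ->
     cycle_edges s1 = cycle_edges s2).

Definition cutvec (R : realType) (V : finType) (e : rel V) (S : {set V})
  : edge_t e -> R := fun f => (#|val f :&: S| == 1%N)%:R.

Section Poly.
Variables (R : realType) (I J : finType) (pt : I -> J -> R).

Definition dot (c x : J -> R) : R := \sum_j c j * x j.

Definition in_conv (x : J -> R) : Prop :=
  exists l : I -> R, (forall i, 0 <= l i) /\ \sum_i l i = 1 /\
    forall j, x j = \sum_i l i * pt i j.

Definition is_face (F : (J -> R) -> Prop) : Prop :=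
  exists (c : J -> R) (b : R), (forall i, dot c (pt i) <= b) /\
    forall x, F x <-> (in_conv x /\ dot c x = b).

Definition is_vertex (p : J -> R) : Prop := is_face (fun x => x = p).

Definition segment (p q : J -> R) (x : J -> R) : Prop :=
  exists t : R, 0 <= t <= 1 /\ x = (fun j => (1 - t) * p j + t * q j).

(* edges of the 1-skeleton: one-dimensional faces, i.e. segments [p,q]
   between distinct vertices p, q that are faces *)
Definition adjacent (p q : J -> R) : Prop :=
  [/\ is_vertex p, is_vertex q, p <> q & is_face (segment p q)].

Fixpoint reach (k : nat) (p q : J -> R) : Prop :=
  match k with
  | O => p = q
  | S k' => reach k' p q \/ exists r, adjacent p r /\ reach k' r q
  end.

Definition is_diameter (d : nat) : Prop :=
  (forall p q, is_vertex p -> is_vertex q -> reach d p q) /\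
  (forall d' : nat, (d' < d)%N ->
     exists p q, [/\ is_vertex p, is_vertex q & ~ reach d' p q]).
End Poly.

(* Main.v *)
Require Import Defs.
From mathcomp Require Import all_boot all_order all_algebra.
From mathcomp Require Import reals.
From mathcomp Require Import ring lra zify.
From Stdlib Require Import FunctionalExtensionality Classical.
Set Implicit Arguments. Unset Strict Implicit. Unset Printing Implicit Defensive.
Import Order.TTheory GRing.Theory Num.Theory.
Local Open Scope ring_scope.

Section Gen.
Variables (R : realType) (I J : finType) (pt : I -> J -> R).

Lemma dot_conv c x (l : I -> R) : (forall j, x j = \sum_i l i * pt i j) ->
  dot c x = \sum_i l i * dot c (pt i).
Proof.
move=> hx; rewrite /dot.
under eq_bigr => j _ do rewrite hx big_distrr /=.
rewrite exchange_big /=; apply: eq_bigr => i _; rewrite big_distrr /=.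
by apply: eq_bigr => j _; rewrite mulrCA.
Qed.

Lemma tight c b (l : I -> R) : (forall i, dot c (pt i) <= b) ->
  (forall i, 0 <= l i) -> \sum_i l i = 1 -> \sum_i l i * dot c (pt i) = b ->
  forall i, l i != 0 -> dot c (pt i) = b.
Proof.
move=> hb hl hs hd i li0.
have h0 : \sum_i l i * (b - dot c (pt i)) = 0.
  under eq_bigr => k _ do rewrite mulrBr.
  by rewrite sumrB hd -mulr_suml hs mul1r subrr.
have hge : forall k, predT k -> 0 <= l k * (b - dot c (pt k)).
  by move=> k _; rewrite mulr_ge0 // subr_ge0.
move: (psumr_eq0P hge h0 (i:=i) isT) => /eqP.
rewrite mulf_eq0 (negbTE li0) /= subr_eq0 => /eqP ->//.
Qed.

Lemma pt_conv i0 : in_conv pt (pt i0).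
Proof.
exists (fun i => (i == i0)%:R); split; first by move=> i; rewrite ler0n.
split; first by rewrite (bigD1 i0) //= eqxx big1 ?addr0 // => i /negbTE ->.
move=> j; rewrite (bigD1 i0) //= eqxx mul1r big1 ?addr0 //.
by move=> i /negbTE ->; rewrite mul0r.
Qed.

Lemma vertex_pt p : is_vertex pt p -> exists i, p = pt i.
Proof.
case=> c [b [hb hF]].
have [[l [hl [hs hx]]] hd] := (proj1 (hF p) erefl).
have [i li0] : exists i, l i != 0.
  apply: NNPP => hn; move: hs; rewrite big1 => [/eqP|i _]; first by rewrite eq_sym oner_eq0.
  by apply: NNPP => hi; apply: hn; exists i; apply/eqP.
exists i; symmetry; apply/hF; split; first exact: pt_conv.
apply: (tight hb hl hs _ li0); by rewrite -(dot_conv c hx).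
Qed.

Hypothesis pt01 : forall i j, pt i j = 0 \/ pt i j = 1.

Definition cA (A : pred J) (p : J -> R) j := if A j then 2 * p j - 1 else 0.
Definition bA A p := dot (cA A p) p.

Lemma cA_le A i0 i : dot (cA A (pt i0)) (pt i) <= bA A (pt i0).
Proof.
rewrite /bA /dot; apply: ler_sum => j _; rewrite /cA; case: (A j); last by rewrite !mul0r.
by case: (pt01 i0 j) => ->; case: (pt01 i j) => ->; rewrite ?mulr0 ?mulr1 ?mul0r ?mul1r //;
   rewrite ?mulr1 ?subr0 ?sub0r //; lra.
Qed.

Lemma cA_eq A i0 i : dot (cA A (pt i0)) (pt i) = bA A (pt i0) <->
  (forall j, A j -> pt i j = pt i0 j).
Proof.
split; last first.
  move=> h; rewrite /bA /dot; apply: eq_bigr => j _; rewrite /cA.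
  by case Aj: (A j); [rewrite (h j Aj) | rewrite !mul0r].
move=> heq j Aj.
have h0 : \sum_j (cA A (pt i0) j * pt i0 j - cA A (pt i0) j * pt i j) = 0.
  by rewrite sumrB -/(dot (cA A (pt i0)) (pt i0)) -/(bA A (pt i0)) -heq subrr.
have := @psumr_eq0P _ _ predT _ _ h0 j isT.
have hge : forall k, 0 <= cA A (pt i0) k * pt i0 k - cA A (pt i0) k * pt i k.
  move=> k; rewrite /cA; case: (A k); last by rewrite !mul0r subrr.
  by case: (pt01 i0 k) => ->; case: (pt01 i k) => ->; lra.
move=> /(_ (fun k _ => hge k)); rewrite /cA Aj.
by case: (pt01 i0 j) => ->; case: (pt01 i j) => ->; lra.
Qed.

Lemma vertex_of i0 : is_vertex pt (pt i0).
Proof.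
exists (cA predT (pt i0)), (bA predT (pt i0)); split; first exact: cA_le.
move=> x; split.
  by move->; split; [exact: pt_conv | apply/cA_eq].
case=> [[l [hl [hs hx]]] hd].
have ht := tight (@cA_le predT i0) hl hs.
rewrite (dot_conv _ hx) in hd.
have he : forall i, l i != 0 -> pt i = pt i0.
  move=> i /(ht hd) /cA_eq h; apply: functional_extensionality => j; exact: h.
apply: functional_extensionality => j; rewrite hx.
transitivity (\sum_i l i * pt i0 j); last by rewrite -mulr_suml hs mul1r.
apply: eq_bigr => i _; have [->|/he ->] := eqVneq (l i) 0; by rewrite ?mul0r.
Qed.

Lemma adjacent_of i0 i1 : pt i0 <> pt i1 ->
  (forall i, (forall j, pt i0 j = pt i1 j -> pt i j = pt i0 j) ->
     pt i = pt i0 \/ pt i = pt i1) ->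
  adjacent pt (pt i0) (pt i1).
Proof.
move=> hne H; split; [exact: vertex_of | exact: vertex_of | exact: hne|].
have [j0 hj0] : exists j0, pt i0 j0 != pt i1 j0.
  apply: NNPP => hn; apply: hne; apply: functional_extensionality => j.
  by apply: NNPP => h; apply: hn; exists j; apply/eqP.
set A := fun j => pt i0 j == pt i1 j.
have hi01 : i0 != i1 by apply/eqP => h; apply: hne; rewrite h.
have hq : dot (cA A (pt i0)) (pt i1) = bA A (pt i0).
  by apply/cA_eq => j /eqP.
exists (cA A (pt i0)), (bA A (pt i0)); split; first exact: cA_le.
move=> x; split.
  case=> t [/andP[t0 t1] ->]; split.
    exists (fun i => (1 - t) * (i == i0)%:R + t * (i == i1)%:R); split.
      by move=> i; rewrite addr_ge0 // mulr_ge0 // ?subr_ge0.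
    split.
      rewrite big_split /= -!mulr_sumr.
      rewrite (bigD1 i0) //= eqxx big1 ?addr0; last by move=> i /negbTE ->.
      rewrite (bigD1 i1) //= eqxx big1 ?addr0; last by move=> i /negbTE ->.
      by rewrite !mulr1 subrK.
    move=> j; under eq_bigr => i _ do rewrite mulrDl.
    rewrite big_split /=.
    rewrite (bigD1 i0) //= eqxx big1 ?addr0; last by move=> i /negbTE ->; rewrite mulr0 mul0r.
    rewrite (bigD1 i1) //= eqxx big1 ?addr0; last by move=> i /negbTE ->; rewrite mulr0 mul0r.
    by rewrite !mulr1.
  transitivity ((1 - t) * dot (cA A (pt i0)) (pt i0) + t * dot (cA A (pt i0)) (pt i1)).
    rewrite /dot !mulr_sumr -big_split /=; apply: eq_bigr => j _; ring.
  rewrite hq /bA; ring.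
case=> [[l [hl [hs hx]]] hd].
have ht := tight (@cA_le A i0) hl hs.
rewrite (dot_conv _ hx) in hd.
have he : forall i, l i != 0 -> pt i = pt i0 \/ pt i = pt i1.
  move=> i /(ht hd) /cA_eq h; apply: H => j hj; apply: h; exact/eqP.
pose t := \sum_i l i * (pt i j0 != pt i0 j0)%:R.
have hterm : forall i j, l i * pt i j =
    l i * pt i0 j + l i * (pt i j0 != pt i0 j0)%:R * (pt i1 j - pt i0 j).
  move=> i j; have [->|/he [] ->] := eqVneq (l i) 0; first by rewrite !mul0r add0r.
    by rewrite eqxx mulr0 mul0r addr0.
  by rewrite eq_sym hj0 mulr1; ring.
exists t; split.
  apply/andP; split; first by apply: sumr_ge0 => i _; rewrite mulr_ge0.
  rewrite -hs; apply: ler_sum => i _; case: (_ != _); rewrite ?mulr1 ?mulr0 //.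
apply: functional_extensionality => j; rewrite hx.
under eq_bigr => i _ do rewrite hterm.
rewrite big_split /= -!mulr_suml hs mul1r -/t; ring.
Qed.
End Gen.

Lemma reach_mono (R : realType) (I J : finType) (pt : I -> J -> R) k k' p q :
  reach pt k p q -> (k <= k')%N -> reach pt k' p q.
Proof.
move=> h /subnK <-; elim: (k' - k)%N => [|i IH] //=; by left.
Qed.
Section Graph.
Variables (R : realType) (V : finType) (e : rel V).
Hypotheses (e_sym : symmetric e) (e_irr : irreflexive e).
Notation cv := (@cutvec R V e).

Definition cross (S : {set V}) x y := (x \in S) (+) (y \in S).
Definition symd (A B : {set V}) := [set z | (z \in A) (+) (z \in B)].
Definition ham (p q : edge_t e -> R) := #|[set f : edge_t e | p f != q f]|.

Lemma edgeP (f : edge_t e) : exists x y, e x y /\ val f = [set x; y].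
Proof.
case: f => s /=; rewrite inE => /existsP [u /existsP [v /andP [euv /eqP ->]]].
by exists u, v.
Qed.

Lemma card2S x y (S : {set V}) : x != y ->
  (#|[set x; y] :&: S| == 1%N) = cross S x y.
Proof.
move=> nxy; rewrite /cross.
case hx: (x \in S); case hy: (y \in S).
- have -> : [set x; y] :&: S = [set x; y].
  apply/setP => z; rewrite !inE; case: (eqVneq z x) => hzx; case: (eqVneq z y) => hzy; (try subst); rewrite ?eqxx ?(negbTE hzx) ?(negbTE hzy) ?hx ?hy ?(negbTE nxy) ?orbT //=; try by rewrite eqxx in nxy.
  by rewrite cards2 nxy.
- have -> : [set x; y] :&: S = [set x].
  apply/setP => z; rewrite !inE; case: (eqVneq z x) => hzx; case: (eqVneq z y) => hzy; (try subst); rewrite ?eqxx ?(negbTE hzx) ?(negbTE hzy) ?hx ?hy ?(negbTE nxy) ?orbT //=; try by rewrite eqxx in nxy.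
  by rewrite addbF; apply/cards1P; exists x.
- have -> : [set x; y] :&: S = [set y].
  apply/setP => z; rewrite !inE; case: (eqVneq z x) => hzx; case: (eqVneq z y) => hzy; (try subst); rewrite ?eqxx ?(negbTE hzx) ?(negbTE hzy) ?hx ?hy ?(negbTE nxy) ?orbT //=; try by rewrite eqxx in nxy.
  by rewrite addFb; apply/cards1P; exists y.
- have -> : [set x; y] :&: S = set0.
  apply/setP => z; rewrite !inE; case: (eqVneq z x) => hzx; case: (eqVneq z y) => hzy; (try subst); rewrite ?eqxx ?(negbTE hzx) ?(negbTE hzy) ?hx ?hy ?(negbTE nxy) ?orbT //=; try by rewrite eqxx in nxy.
  by rewrite cards0.
Qed.

Lemma cvE (f : edge_t e) x y S : e x y -> val f = [set x; y] ->
  cv S f = (cross S x y)%:R.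
Proof.
move=> exy hf; rewrite /cutvec hf card2S //.
by apply/eqP => h; move: exy; rewrite h e_irr.
Qed.

Lemma cv01 S f : cv S f = 0 \/ cv S f = 1.
Proof. by rewrite /cutvec; case: (_ == _); [right|left]. Qed.

Lemma cross_symd A B x y : cross (symd A B) x y = cross A x y (+) cross B x y.
Proof.
rewrite /cross !inE; by case: (x \in A); case: (x \in B); case: (y \in A); case: (y \in B).
Qed.

Lemma cv_ext S T : (forall x y, e x y -> cross S x y = cross T x y) -> cv S = cv T.
Proof.
move=> h; apply: functional_extensionality => f.
have [x [y [exy hf]]] := edgeP f.
by rewrite (cvE _ exy hf) (cvE _ exy hf) h.
Qed.

Lemma cv_neq S T f x y : e x y -> val f = [set x; y] ->
  (cv S f != cv T f) = cross (symd S T) x y.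
Proof.
move=> exy hf; rewrite (cvE _ exy hf) (cvE _ exy hf) cross_symd.
by case: (cross S x y); case: (cross T x y); rewrite ?eqxx ?oner_eq0 ?(eq_sym 0) ?oner_eq0.
Qed.

Lemma ham_tri p q r : (ham p r <= ham p q + ham q r)%N.
Proof.
rewrite /ham; apply: leq_trans (_ : #|[set f | p f != q f] :|: [set f | q f != r f]| <= _)%N.
  apply: subset_leq_card; apply/subsetP => f; rewrite !inE.
  by case: (p f =P q f) => [->|] //= _.
by rewrite cardsU leq_subr.
Qed.

Lemma ham0 p : ham p p = 0%N.
Proof. by rewrite /ham; apply/eqP; rewrite cards_eq0; apply/eqP/setP => f; rewrite !inE eqxx. Qed.

Lemma mem_edges x y : e x y -> [set x; y] \in edges e.
Proof. by move=> h; rewrite inE; apply/existsP; exists x; apply/existsP; exists y; rewrite h eqxx. Qed.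

Definition edge_of x y (h : e x y) : edge_t e := exist _ [set x; y] (mem_edges h).

Lemma cv_edge S x y (h : e x y) : cv S (edge_of h) = (cross S x y)%:R.
Proof. exact: cvE. Qed.

Lemma natb_inj (a b : bool) : (a%:R : R) = b%:R -> a = b.
Proof. by case: a; case: b => // /eqP; rewrite ?oner_eq0 // eq_sym oner_eq0. Qed.

Lemma set2_eq (a b c d : V) : [set a; b] = [set c; d] ->
  (a = c /\ b = d) \/ (a = d /\ b = c).
Proof.
move=> h.
have ha : a \in [set c; d] by rewrite -h !inE eqxx.
have hb : b \in [set c; d] by rewrite -h !inE eqxx orbT.
have hc : c \in [set a; b] by rewrite h !inE eqxx.
have hd : d \in [set a; b] by rewrite h !inE eqxx orbT.
move: ha hb hc hd; rewrite !inE.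
by do 4! case/orP => /eqP ?; subst; auto.
Qed.

Section Tree.
Variable r : V.
Hypothesis hconn : forall u v, connect e u v.

Fixpoint N (k : nat) : {set V} :=
  if k is k'.+1 then N k' :|: [set y | [exists x in N k', e x y]] else [set r].

Lemma N_mono k j : (k <= j)%N -> N k \subset N j.
Proof.
move=> /subnK <-; elim: (j - k)%N => [|i IH] //=.
by apply: subset_trans IH _; apply: subsetUl.
Qed.

Lemma N_path x p k : path e x p -> x \in N k -> last x p \in N (k + size p).
Proof.
elim: p x k => [|y p IH] x k /=; first by rewrite addn0.
case/andP => exy hp hx; rewrite addnS -addSn; apply: IH => //=.
by rewrite inE; apply/orP; right; rewrite inE; apply/existsP; exists x; rewrite hx.
Qed.

Lemma N_all v : exists k, v \in N k.
Proof.
have /connectP [p hp ->] := hconn r v; exists (0 + size p)%N.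
by apply: N_path => //; rewrite /= inE.
Qed.

Definition dist v := ex_minn (N_all v).

Lemma distP v : v \in N (dist v).
Proof. by rewrite /dist; case: ex_minnP. Qed.

Lemma dist_min v k : v \in N k -> (dist v <= k)%N.
Proof. by rewrite /dist; case: ex_minnP => m _ h /h. Qed.

Lemma dist0 v : (dist v == 0%N) = (v == r).
Proof.
apply/idP/idP => [/eqP h|/eqP ->].
  by have := distP v; rewrite h /= inE.
by rewrite -leqn0; apply: dist_min; rewrite /= inE.
Qed.

Lemma par_ex v : v != r -> exists u, e v u && ((dist u).+1 == dist v).
Proof.
move=> hv; have := distP v; have : dist v != 0%N by rewrite dist0.
case hd: (dist v) => [|k] // _ /=; rewrite inE => /orP [hk|].
  by have := dist_min hk; rewrite hd ltnn.
rewrite inE => /existsP [x /andP [hx exv]]; exists x; rewrite e_sym exv /=.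
have hxk := dist_min hx.
rewrite eqSS eqn_leq hxk /= leqNgt; apply/negP => hlt.
have : v \in N k.
  have := N_mono hlt; move/subsetP; apply.
  rewrite /= inE; apply/orP; right; rewrite inE; apply/existsP; exists x.
  by rewrite distP.
by move/dist_min; rewrite hd ltnn.
Qed.

Definition par v := if [pick u | e v u && ((dist u).+1 == dist v)] is Some u then u else r.

Lemma parP v : v != r -> e v (par v) /\ (dist (par v)).+1 = dist v.
Proof.
move=> hv; rewrite /par; case: pickP => [u /andP [h1 /eqP h2]|h] //.
by have [u hu] := par_ex hv; move: (h u); rewrite hu.
Qed.

Lemma dist_ind (P : V -> Prop) : P r -> (forall u, u != r -> P (par u) -> P u) ->
  forall u, P u.
Proof.
move=> h0 hs u; move: {2}(dist u) (leqnn (dist u)) => k; elim: k u => [|k IH] u hu.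
  by have /eqP -> : u == r by rewrite -dist0 -leqn0.
have [->|hur] := eqVneq u r; first exact: h0.
apply: hs => //; apply: IH; have [_ h] := parP hur.
by rewrite -ltnS h.
Qed.

Lemma const_par (g : V -> bool) : (forall u, u != r -> g u = g (par u)) -> forall u, g u = g r.
Proof.
move=> h; apply: (dist_ind (P := fun u => g u = g r)) => // u hu IH; by rewrite h.
Qed.

Definition anc v u := v \in traject par u (dist u).+1.

Lemma anc_r v : anc v r = (v == r).
Proof.
rewrite /anc; have /eqP -> : dist r == 0%N by rewrite dist0.
by rewrite /= inE.
Qed.

Lemma anc_rec v u : u != r -> anc v u = (v == u) || anc v (par u).
Proof.
move=> hu; rewrite /anc; have [_ <-] := parP hu.
by rewrite [traject _ _ _.+1]/= inE.
Qed.

Lemma anc_dist v u : anc v u -> (dist v <= dist u)%N.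
Proof.
move: u; apply: dist_ind => [|u hu IH]; first by rewrite anc_r => /eqP ->.
rewrite anc_rec // => /orP [/eqP ->//|/IH]; have [_ <-] := parP hu.
by move/leq_trans; apply.
Qed.

Definition D v := [set u | anc v u].

Lemma crossD_tree v u : v != r -> u != r -> cross (D v) u (par u) = (u == v).
Proof.
move=> hv hu; rewrite /cross !inE anc_rec //.
have [<-|hne] := eqVneq u v; rewrite ?eqxx /=.
  apply/negP => /anc_dist; have [_ <-] := parP hu; by rewrite ltnn.
by rewrite addbb.
Qed.

Lemma r_notin_D v : v != r -> r \notin D v.
Proof. by move=> hv; rewrite inE anc_r. Qed.


Definition m (W T : {set V}) := #|[set u | (u != r) && cross (symd W T) u (par u)]|.

Lemma m_le W T : (m W T <= #|V| - 1)%N.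
Proof.
rewrite /m; apply: leq_trans (_ : #|[set~ r]| <= _)%N; last by rewrite cardsC1 subn1.
by apply: subset_leq_card; apply/subsetP => u; rewrite !inE => /andP [].
Qed.

Lemma m_flip W T v : v != r -> cross (symd W T) v (par v) ->
  m (symd W (D v)) T = (m W T).-1.
Proof.
move=> hv hc; rewrite /m (cardsD1 v [set u | (u != r) && cross (symd W T) u (par u)]).
rewrite inE hv hc /=; apply: eq_card => u; rewrite !inE.
have [->|huv] := eqVneq u v.
  rewrite hv /= !cross_symd (crossD_tree hv hv) eqxx; move: hc; rewrite cross_symd.
  by case: (cross W v (par v)); case: (cross T v (par v)).
rewrite /=; case hur: (u != r) => //=.
rewrite !cross_symd (crossD_tree hv) //.
by rewrite (negbTE huv) addbF.
Qed.

Lemma m0 W T : m W T = 0%N -> cv W = cv T.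
Proof.
move=> /eqP; rewrite cards_eq0 => /eqP h0.
set Y := symd W T.
have hY : forall u, u != r -> (u \in Y) = (par u \in Y).
  move=> u hu; have : u \notin [set u | (u != r) && cross Y u (par u)] by rewrite h0 inE.
  rewrite inE hu /= /cross; by case: (u \in Y); case: (par u \in Y).
have hc := const_par hY.
apply: cv_ext => x y _; move: (hc x) (hc y); rewrite /Y /cross !inE.
by case: (x \in W); case: (x \in T); case: (y \in W); case: (y \in T); case: (r \in W); case: (r \in T).
Qed.

Lemma flip_adj W v : v != r -> adjacent cv (cv W) (cv (symd W (D v))).
Proof.
move=> hv; have [ev _] := parP hv.
have hvD : cross (D v) v (par v) by rewrite crossD_tree ?eqxx.
apply: (adjacent_of (@cv01)).
  move=> h; have := congr1 (fun p => p (edge_of ev)) h; rewrite /= !cv_edge.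
  by move/natb_inj; rewrite cross_symd hvD addbT; case: (cross W v (par v)).
move=> Z hZ.
have hZe : forall x y (h : e x y), cross (D v) x y = false -> cross Z x y = cross W x y.
  move=> x y h hD; apply: natb_inj; rewrite -!(cv_edge _ h); apply: hZ.
  by rewrite !cv_edge cross_symd hD addbF.
set Y := symd Z W.
have hY : forall u, u != r -> u != v -> (u \in Y) = (par u \in Y).
  move=> u hu huv; have [eu _] := parP hu.
  have := hZe _ _ eu; rewrite crossD_tree // (negbTE huv) => /(_ erefl).
  rewrite /Y !inE /cross.
  by case: (u \in Z); case: (u \in W); case: (par u \in Z); case: (par u \in W).
set c := cross Y v (par v).
have hg := @const_par (fun u => (u \in Y) (+) ((u \in D v) && c)).
have {hg} hg : forall u, (u \in Y) (+) ((u \in D v) && c) = (r \in Y).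
  move=> u; rewrite hg; first by rewrite (negbTE (r_notin_D hv)) andFb addbF.
  move=> w hw; have [->|hwv] := eqVneq w v.
    have hvin : v \in D v by rewrite inE anc_rec // eqxx.
    move: hvD; rewrite /c /cross hvin.
    by case: (par v \in D v); case: (v \in Y); case: (par v \in Y).
  have := crossD_tree hv hw; rewrite (negbTE hwv) /cross (hY w hw hwv).
  by case: (w \in D v); case: (par w \in D v); case: (par w \in Y).
case hc: c; [right|left]; apply: cv_ext => x y _; move: (hg x) (hg y);
  rewrite /Y hc /cross !inE;
  by case: (x \in Z); case: (x \in W); case: (y \in Z); case: (y \in W);
     case: (anc v x); case: (anc v y); case: (r \in Z); case: (r \in W).
Qed.

Lemma reach_m T k W : (m W T <= k)%N -> reach cv k (cv W) (cv T).
Proof.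
elim: k W => [|k IH] W hm.
  by rewrite /= (m0 (_ : m W T = 0%N)) //; apply/eqP; rewrite -leqn0.
have [h0|hpos] := eqVneq (m W T) 0%N.
  by left; apply: IH; rewrite h0.
have [v] : exists v, v \in [set u | (u != r) && cross (symd W T) u (par u)].
  apply/set0Pn; by rewrite -cards_eq0.
rewrite inE => /andP [hv hc].
right; exists (cv (symd W (D v))); split; first exact: flip_adj.
by apply: IH; rewrite m_flip //; move: hm hpos; case: (m W T).
Qed.

End Tree.

Lemma upper (hconn : forall u v, connect e u v) p q :
  is_vertex cv p -> is_vertex cv q -> reach cv (#|V| - 1) p q.
Proof.
move=> /vertex_pt [S ->] /vertex_pt [T ->].
case: (pickP (fun _ : V => true)) => [r _|h0].
  by apply: (@reach_m r hconn); apply: m_le.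
have -> : cv S = cv T.
  apply: functional_extensionality => f; have [x _] := edgeP f.
  by have := h0 x.
by apply: (reach_mono (k := 0%N)).
Qed.


Section Tree2.
Variable r : V.
Hypothesis hconn : forall u v, connect e u v.

Definition S0 := [set u | odd (dist r hconn u)].

Lemma lower_count : (#|V| - 1 <= ham (cv set0) (cv S0))%N.
Proof.
case: (pickP (fun u => u != r)) => [u0 hu0|hnone]; last first.
  have h : [set~ r] = set0 by apply/setP => u; rewrite !inE; have := hnone u => /= ->.
  by rewrite subn1 -(cardsC1 r) h cards0.
have [eu0 _] := parP hconn hu0.
pose f0 := edge_of eu0.
pose F u := insubd f0 [set u; par r hconn u].
have hF : forall u, u != r -> val (F u) = [set u; par r hconn u].
  move=> u hu; rewrite /F val_insubd; have [eu _] := parP hconn hu.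
  by rewrite (mem_edges eu).
apply: leq_trans (_ : #|F @: [set~ r]| <= _)%N.
  rewrite card_in_imset ?cardsC1 ?subn1 //.
  move=> u w; rewrite !inE => hu hw /(congr1 val); rewrite !hF //.
  case/set2_eq => [[//]|[h1 h2]].
  have [_ du] := parP hconn hu; have [_ dw] := parP hconn hw.
  by move: du dw; rewrite -h1 -h2 => <-; lia.
apply: subset_leq_card; apply/subsetP => f /imsetP [u hu ->]; move: hu; rewrite !inE => hu.
have [eu du] := parP hconn hu.
rewrite (cv_neq _ _ eu (hF u hu)) /cross !inE -du /=.
by case: (odd _).
Qed.

End Tree2.


Definition rest (X : {set V}) : rel V := [rel a b | [&& e a b, a \in X & b \in X]].

Lemma cross_exists (A : {set V}) x y : connect e x y -> x \in A -> y \notin A ->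
  exists a b, e a b /\ cross A a b.
Proof.
move=> /connectP [p hp ->]; elim: p x hp => [|z p IH] x /=; first by move=> _ ->.
case/andP => exz hp hx hy; case hz: (z \in A).
  exact: IH hp hz hy.
by exists x, z; rewrite /cross hx hz.
Qed.

Lemma cross_setC X a b : cross (~: X) a b = cross X a b.
Proof. by rewrite /cross !inE; case: (a \in X); case: (b \in X). Qed.

Lemma split_lemma (hconn : forall u v, connect e u v) (X : {set V}) x y :
  x \in X -> y \in X -> ~~ connect (rest X) x y ->
  exists U1 U2 : {set V},
   [/\ forall a b, cross X a b = cross U1 a b (+) cross U2 a b,
       forall a b, e a b -> ~~ (cross U1 a b && cross U2 a b),
       exists a b, e a b /\ cross U1 a b &
       exists a b, e a b /\ cross U2 a b].
Proof.
move=> hx hy hnc.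
pose U1 := [set z | (z \in X) && connect (rest X) x z].
pose U2 := [set z | (z \in X) && ~~ connect (rest X) x z].
have hmem : forall z, (z \in X) = (z \in U1) (+) (z \in U2).
  by move=> z; rewrite !inE; case: (z \in X); case: (connect _ x z).
have hno : forall a b, e a b -> ~~ ((a \in U1) && (b \in U2)).
  move=> a b eab; apply/negP; case/andP; rewrite !inE => /andP [ha ca] /andP [hb /negP]; apply.
  apply: connect_trans ca (connect1 _); by rewrite /rest /= eab ha hb.
have d : forall z, ~~ ((z \in U1) && (z \in U2)).
  by move=> z; rewrite !inE; case: (z \in X); case: (connect _ x z).
exists U1, U2; split.
- by move=> a b; rewrite /cross !hmem; case: (a \in U1); case: (a\in U2); case: (b \in U1); case: (b \in U2).
- move=> a b eab.
  have h1 := hno a b eab; have h2 := hno b a; rewrite e_sym eab in h2; have {}h2 := h2 isT.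
  have da := d a; have db := d b.
  rewrite /cross; move: h1 h2 da db.
  by case: (a \in U1); case: (a \in U2); case: (b \in U1); case: (b \in U2).
- apply: (cross_exists (hconn x y)); first by rewrite inE hx connect0.
  by rewrite inE hy hnc.
- apply: (cross_exists (hconn y x)); first by rewrite inE hy hnc.
  by rewrite inE hx connect0.
Qed.

Lemma orient U x y : e x y -> cross U x y ->
  exists a b, [/\ e a b, a \in U, b \notin U & [set x; y] = [set a; b]].
Proof.
rewrite /cross => exy; case hx: (x \in U) => /= hy.
  by exists x, y; rewrite exy hy.
exists y, x; split; [by rewrite e_sym | exact: hy | by rewrite hx | by rewrite setUC].
Qed.

Lemma path_all (X : {set V}) x p : path (rest X) x p -> all (mem X) p.
Proof.
elim: p x => [|z p IH] x //= /andP [/and3P [_ _ hz] hp].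
by rewrite hz (IH z hp).
Qed.

Lemma next_last (x : V) p : uniq (x :: p) -> next (x :: p) (last x p) = x.
Proof.
move=> hu; rewrite next_nth mem_last index_last //; by rewrite nth_default.
Qed.

Lemma mk_cycle U ai bi aj bj :
  connect (rest U) ai aj -> connect (rest (~: U)) bj bi ->
  e ai bi -> e aj bj -> ai \in U -> aj \in U -> bi \notin U -> bj \notin U ->
  [set ai; bi] != [set aj; bj] ->
  exists s, [/\ simple_cycle e s, [set ai; bi] \in cycle_edges s,
     [set aj; bj] \in cycle_edges s &
     forall g a b, g \in cycle_edges s -> g = [set a; b] -> a \in U -> b \notin U ->
        g = [set ai; bi] \/ g = [set aj; bj]].
Proof.
move=> /connectP [p0 hp0 hl0] /connectP [q0 hq0 hl1] ei ej hai haj hbi hbj hne.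
case: (shortenP hp0) hl0 => P hP huP _ hlP.
case: (shortenP hq0) hl1 => Q hQ huQ _ hlQ.
have PU := path_all hP; have QU := path_all hQ.
pose s := ai :: (P ++ bj :: Q).
have hs : s = (ai :: P) ++ (bj :: Q) by [].
have hus : uniq s.
  rewrite hs cat_uniq huP huQ andbT; apply/hasPn => z hz.
  have zO : z \notin U.
    move: hz; rewrite inE => /orP [/eqP -> //| hzQ]; have := allP QU z hzQ; by rewrite /= inE.
  apply/negP; rewrite inE => /orP [/eqP hz'|hzP]; first by move: zO; rewrite hz' hai.
  by move: zO; have := allP PU z hzP => /= ->.
have hsz : (2 < size s)%N.
  rewrite /s /= size_cat /=.
  move: hlP hlQ hne; case: P {hP huP PU hus hs s} => [|p1 P']; case: Q {hQ huQ QU} => [|q1 Q'] /=; try lia.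
  by move=> -> ->; rewrite eqxx.
have sub1 : subrel (rest U) e by move=> a b /and3P [].
have sub2 : subrel (rest (~: U)) e by move=> a b /and3P [].
have hcyc : cycle e s.
  rewrite /s /= rcons_path cat_path /= -hlP ej /= last_cat /= -hlQ e_sym ei andbT.
  by rewrite (sub_path sub1 hP) (sub_path sub2 hQ).
pose Rl := [rel u w | ((u \in U) == (w \in U)) || ((u == aj) && (w == bj)) || ((u == bi) && (w == ai))].
have sub3 : subrel (rest U) Rl by move=> a b /and3P [_ ha hb]; rewrite /= ha hb.
have sub4 : subrel (rest (~: U)) Rl.
  by move=> a b /and3P [_]; rewrite !inE => /negbTE ha /negbTE hb; rewrite /= ha hb.
have hcycR : cycle Rl s.
  rewrite /s /= rcons_path cat_path /= -hlP last_cat /= -hlQ !eqxx !orbT /= andbT.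
  by rewrite (sub_path sub3 hP) (sub_path sub4 hQ).
have hlast : bi = last ai (P ++ bj :: Q) by rewrite last_cat.
have hn1 : next s bi = ai by rewrite hlast next_last.
pose s2 := bj :: (Q ++ ai :: P).
have hs2 : rot (size (ai :: P)) s = s2 by rewrite hs rot_size_cat.
have hus2 : uniq s2 by rewrite -hs2 rot_uniq.
have hlast2 : aj = last bj (Q ++ ai :: P) by rewrite last_cat.
have hn2 : next s aj = bj by rewrite -(next_rot (size (ai :: P)) hus) hs2 hlast2 next_last.
have hajs : aj \in s by rewrite -(mem_rot (size (ai :: P))) hs2 hlast2 mem_last.
have hbis : bi \in s by rewrite hlast mem_last.
exists s; split.
- by rewrite /simple_cycle hcyc hus hsz.
- by apply/imsetP; exists bi => //; rewrite hn1 setUC.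
- by apply/imsetP; exists aj => //; rewrite hn2.
move=> g a b /imsetP [z hz ->] hg ha hb.
have hR : Rl z (next s z) := next_cycle hcycR hz.
case/set2_eq: hg => [[hza hnb]|[hzb hna]].
- rewrite hnb hza in hR *; move: hR; rewrite /= ha (negbTE hb) /=.
  by case/orP => /andP [/eqP -> /eqP ->]; [right|left; rewrite setUC].
- rewrite hna hzb in hR *; move: hR; rewrite /= ha (negbTE hb) /=.
  by case/orP => /andP [/eqP -> /eqP ->]; [right|left; rewrite setUC].
Qed.


Lemma cycle_contra (hcac : is_cactus e) (U : {set V}) (f1 f2 f3 : edge_t e) :
  f1 != f2 -> f2 != f3 -> f3 != f1 ->
  (forall x y, x \in U -> y \in U -> connect (rest U) x y) ->
  (forall x y, x \in ~:U -> y \in ~:U -> connect (rest (~:U)) x y) ->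
  (forall f : edge_t e, f \in [:: f1; f2; f3] ->
     exists x y, e x y /\ val f = [set x; y] /\ cross U x y) -> False.
Proof.
move=> n12 n23 n31 cU cO hc.
have hor : forall f, f \in [:: f1; f2; f3] ->
    exists a b, [/\ e a b, a \in U, b \notin U & val f = [set a; b]].
  move=> f /hc [x [y [h [hf hx]]]]; have [a [b [h1 h2 h3 h4]]] := orient h hx.
  by exists a, b; split => //; rewrite hf.
have m1 : f1 \in [:: f1; f2; f3] by rewrite inE eqxx.
have m2 : f2 \in [:: f1; f2; f3] by rewrite !inE eqxx orbT.
have m3 : f3 \in [:: f1; f2; f3] by rewrite !inE eqxx !orbT.
have [a1 [b1 [e1 ha1 hb1 hf1]]] := hor f1 m1.
have [a2 [b2 [e2 ha2 hb2 hf2]]] := hor f2 m2.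
have [a3 [b3 [e3 ha3 hb3 hf3]]] := hor f3 m3.
have hne : forall (f g : edge_t e) a b c d, f != g -> val f = [set a; b] -> val g = [set c; d] ->
    [set a; b] != [set c; d].
  by move=> f g a b c d hfg <- <-; apply: contra hfg => /eqP /val_inj ->.
have n13 : f1 != f3 by rewrite eq_sym.
have hbO : forall b, b \notin U -> b \in ~: U by move=> b; rewrite inE.
have [s12 [hs12 i12 j12 P12]] := mk_cycle (cU _ _ ha1 ha2) (cO _ _ (hbO _ hb2) (hbO _ hb1))
   e1 e2 ha1 ha2 hb1 hb2 (hne _ _ _ _ _ _ n12 hf1 hf2).
have [s13 [hs13 i13 j13 P13]] := mk_cycle (cU _ _ ha1 ha3) (cO _ _ (hbO _ hb3) (hbO _ hb1))
   e1 e3 ha1 ha3 hb1 hb3 (hne _ _ _ _ _ _ n13 hf1 hf3).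
have heq := hcac.2 _ _ hs12 hs13 _ i12 i13.
rewrite -heq in j13.
case: (P12 _ _ _ j13 erefl ha3 hb3) => h.
  by move: (hne _ _ _ _ _ _ n31 hf3 hf1); rewrite h eqxx.
by move: (hne _ _ _ _ _ _ n23 hf2 hf3); rewrite h eqxx.
Qed.

Lemma dot_add (c p q : edge_t e -> R) : dot c (fun j => p j + q j) = dot c p + dot c q.
Proof. by rewrite /dot -big_split; apply: eq_bigr => j _; rewrite mulrDr. Qed.

Lemma nonadj S T U1 U2 :
  (forall a b, e a b -> cross (symd S T) a b = cross U1 a b (+) cross U2 a b) ->
  (forall a b, e a b -> ~~ (cross U1 a b && cross U2 a b)) ->
  (exists a b, e a b /\ cross U1 a b) -> (exists a b, e a b /\ cross U2 a b) ->
  ~ adjacent cv (cv S) (cv T).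
Proof.
move=> hsp hdj [x1 [y1 [e1 c1]]] [x2 [y2 [e2 c2]]] [_ _ _ [c [b [hb hF]]]].
set A := symd S U1; set B := symd S U2.
have hT : forall a b', e a b' -> cross T a b' = cross S a b' (+) cross U1 a b' (+) cross U2 a b'.
  move=> a b' h; rewrite -addbA -hsp // cross_symd.
  by case: (cross S a b'); case: (cross T a b').
have hmid : forall f, cv S f + cv T f = cv A f + cv B f.
  move=> f; have [a [b' [h hf]]] := edgeP f; rewrite !(cvE _ h hf) /A /B !cross_symd (hT _ _ h).
  move: (hdj _ _ h).
  by case: (cross S a b'); case: (cross U1 a b'); case: (cross U2 a b'); rewrite /= ?addr0 ?add0r.
have hS : dot c (cv S) = b.
  apply: (proj2 (proj1 (hF _) _)); exists 0; split; first by rewrite lexx ler01.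
  by apply: functional_extensionality => j; rewrite subr0 mul1r mul0r addr0.
have hTd : dot c (cv T) = b.
  apply: (proj2 (proj1 (hF _) _)); exists 1; split; first by rewrite lexx ler01.
  by apply: functional_extensionality => j; rewrite subrr mul1r mul0r add0r.
have hAB : dot c (cv A) + dot c (cv B) = b + b.
  transitivity (dot c (cv S) + dot c (cv T)); last by rewrite hS hTd.
  rewrite -!dot_add; congr dot; apply: functional_extensionality => j.
  by rewrite hmid.
have hA : dot c (cv A) = b by have := hb A; have := hb B; lra.
have [t [_ ht]] := proj2 (hF (cv A)) (conj (pt_conv _ A) hA).
have hat : forall x y (h : e x y), cv A (edge_of h) = (1 - t) * cv S (edge_of h) + t * cv T (edge_of h).
  by move=> x y h; rewrite {1}ht.
have c1' : cross U2 x1 y1 = false by move: (hdj _ _ e1); rewrite c1 /= => /negbTE.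
have c2' : cross U1 x2 y2 = false by move: (hdj _ _ e2); rewrite c2 andbT => /negbTE.
have ht1 : t = 1.
  move: (hat _ _ e1); rewrite !cv_edge /A cross_symd (hT _ _ e1) c1 c1'.
  by case: (cross S x1 y1); rewrite /= ?mulr0 ?mulr1 ?addr0 ?add0r; lra.
have ht0 : t = 0.
  move: (hat _ _ e2); rewrite !cv_edge /B /A cross_symd (hT _ _ e2) c2 c2'.
  by case: (cross S x2 y2); rewrite /= ?mulr0 ?mulr1 ?addr0 ?add0r; lra.
by move: ht1; rewrite ht0 => /eqP; rewrite eq_sym oner_eq0.
Qed.

Lemma adj_ham (hcac : is_cactus e) S T : adjacent cv (cv S) (cv T) -> (ham (cv S) (cv T) <= 2)%N.
Proof.
move=> hadj; rewrite leqNgt; apply/negP => /card_gt2P [f1 [f2 [f3 [[h1 h2 h3] [n12 n23 n31]]]]].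
set U := symd S T.
have hconn := hcac.1.
case: (boolP [forall x, forall y, (x \in U) ==> (y \in U) ==> connect (rest U) x y]) => cU; last first.
  move/forallPn: cU => [x /forallPn [y]]; rewrite !negb_imply => /andP [hx /andP [hy hnc]].
  have [U1 [U2 [hs hd h1' h2']]] := split_lemma hconn hx hy hnc.
  by apply: (nonadj (U1:=U1) (U2:=U2) _ hd h1' h2' hadj) => a b _; exact: hs.
case: (boolP [forall x, forall y, (x \in ~: U) ==> (y \in ~: U) ==> connect (rest (~: U)) x y]) => cO; last first.
  move/forallPn: cO => [x /forallPn [y]]; rewrite !negb_imply => /andP [hx /andP [hy hnc]].
  have [U1 [U2 [hs hd h1' h2']]] := split_lemma hconn hx hy hnc.
  by apply: (nonadj (U1:=U1) (U2:=U2) _ hd h1' h2' hadj) => a b _; rewrite -hs cross_setC.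
apply: (@cycle_contra hcac U _ _ _ n12 n23 n31).
- move=> x y hx hy; move/forallP: cU => /(_ x) /forallP /(_ y); by rewrite hx hy.
- move=> x y hx hy; move/forallP: cO => /(_ x) /forallP /(_ y); by rewrite hx hy.
move=> f hf.
have hf' : f \in [set f | cv S f != cv T f].
  by move: hf; rewrite !in_cons in_nil orbF => /or3P [] /eqP ->.
move: hf'; rewrite inE; have [x [y [h hfv]]] := edgeP f; rewrite (cv_neq _ _ h hfv) => hc.
by exists x, y.
Qed.

Lemma reach_ham (hcac : is_cactus e) k p q :
  is_vertex cv p -> reach cv k p q -> (ham p q <= 2 * k)%N.
Proof.
elim: k p => [|k IH] p hp /=; first by move=> ->; rewrite ham0.
case=> [h|[r' [hadj hr]]]; first by apply: leq_trans (IH _ hp h) _; rewrite leq_mul2l leqnSn orbT.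
have [_ hvr _ _] := hadj.
have [S hS] := vertex_pt hp; have [T hT] := vertex_pt hvr.
apply: leq_trans (ham_tri p r' q) _.
rewrite mulnS -add2n leq_add //; last exact: IH.
by move: hadj; rewrite hS hT; apply: adj_ham.
Qed.

End Graph.

Lemma ex_min_nat (P : nat -> Prop) n : P n -> exists k, P k /\ forall j, (j < k)%N -> ~ P j.
Proof.
elim/ltn_ind: n => n IH Pn.
case: (classic (exists j, (j < n)%N /\ P j)) => [[j [hj Pj]]|hno].
  exact: IH j hj Pj.
by exists n; split => // j hj Pj; apply: hno; exists j.
Qed.


Theorem theorem4 (R : realType) (V : finType) (e : rel V)
  (e_sym : symmetric e) (e_irr : irreflexive e) (cactus : is_cactus e) :
  exists d : nat, is_diameter (@cutvec R V e) d /\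
    (#|V|./2 <= d)%N /\ (d <= #|V| - 1)%N.
Proof.
have hconn := cactus.1.
pose P k := forall p q, is_vertex (@cutvec R V e) p -> is_vertex (@cutvec R V e) q ->
  reach (@cutvec R V e) k p q.
have hPn : P (#|V| - 1)%N by move=> p q; exact: (upper e_sym e_irr hconn).
have [d [hPd hmin]] := ex_min_nat hPn.
exists d; split.
  split => // d' hd'; apply: NNPP => hn; apply: (hmin d' hd') => p q hp hq.
  by apply: NNPP => hr; apply: hn; exists p, q; split.
split; last first.
  rewrite leqNgt; apply/negP => hlt; exact: (hmin _ hlt hPn).
case: (pickP (fun _ : V => true)) => [r _|h0]; last first.
  by have -> : #|V| = 0%N by apply: eq_card0 => x; have := h0 x.
rewrite leqNgt; apply/negP => hlt.
have h1 := lower_count R e_sym e_irr r hconn.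
have h2 := reach_ham e_sym e_irr cactus (vertex_of (@cv01 R V e) set0)
  (hPd _ _ (vertex_of (@cv01 R V e) set0) (vertex_of (@cv01 R V e) (S0 r hconn))).
have hpos : (0 < #|V|)%N by apply/card_gt0P; exists r.
move: hlt h1 h2 (odd_double_half #|V|) hpos; rewrite -mul2n.
move: (#|V|./2) (ham _ _) #|V| => a c n; case: (odd n) => /=; lia.
Qed.
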